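(* For $q\in\{1,2\}$ and all $M\in\mathbb{R}^{n\times n}$, $$\|\mathcal{U}_b(M)\|_{b,2^q}\le2^{q-1}\|M\|_{b,2^q}.$$
   Context: Fix a block structure $0=n_0<n_1<\dots<n_m=n$; block $(i,j)$, $0\le i,j\le m-1$, consists of rows $n_i+1..n_{i+1}$ and columns $n_j+1..n_{j+1}$. The block upper triangular truncation $\mathcal{U}_b(M)$ has blocks $\mathcal{U}_b(M)(i,j)=M(i,j)$ for $i\le j$ and $0$ for $i>j$. $\mathcal{D}_b\subset\mathbb{R}^{n\times m}$ is the set of $X$ with $X_{ij}=0$ whenever $i\notin[n_{j-1}+1,n_j]$, and $\|A\|_{b,p}:=\sup\{\|AX\|_{S_p}:X\in\mathcal{D}_b,\ \|X\|_{S_\infty}\le1\}$ with $\|\cdot\|_{S_p}$ the Schatten $p$-norm. *)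

(* Defs.v *)
From HB Require Import structures.
From mathcomp Require Import all_boot all_order all_algebra.
From mathcomp Require Import boolp classical_sets reals.
Set Implicit Arguments. Unset Strict Implicit. Unset Printing Implicit Defensive.
Import Order.TTheory GRing.Theory Num.Theory.
Local Open Scope ring_scope.
Local Open Scope classical_set_scope.

(* Block i (0-based, i < m) consists of the 0-based indices r with
   nb i <= r < nb i.+1 (i.e. the 1-based indices nb i + 1 .. nb i.+1). *)
Definition block_structure (n m : nat) (nb : nat -> nat) : Prop :=
  nb 0%N = 0%N /\ (forall i, (i < m)%N -> (nb i < nb i.+1)%N) /\ nb m = n.

(* 0-based block index of a 0-based row/column index r. *)
Definition blk (m : nat) (nb : nat -> nat) (r : nat) : nat :=
  count (fun k => nb k.+1 <= r)%N (iota 0 m).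

Definition Ub {R : pzRingType} (n m : nat) (nb : nat -> nat) (M : 'M[R]_n)
  : 'M[R]_n :=
  \matrix_(r < n, c < n) if (blk m nb r <= blk m nb c)%N then M r c else 0.

Definition inDb {R : pzRingType} (n m : nat) (nb : nat -> nat)
  (X : 'M[R]_(n, m)) : Prop :=
  forall (r : 'I_n) (j : 'I_m), ~~ ((nb j <= r) && (r < nb j.+1))%N -> X r j = 0.

Definition opnorm_le1 {R : realType} (n m : nat) (X : 'M[R]_(n, m)) : Prop :=
  forall v : 'cV[R]_m,
    \sum_(i < n) ((X *m v) i 0) ^+ 2 <= \sum_(j < m) (v j 0) ^+ 2.

(* Schatten p-norm for p = 2^q (q >= 1):
   ||A||_{S_p} = (tr ((A^T A)^(p/2)))^(1/p), the p/2 = 2^(q-1) power being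
   a matrix power, and the 1/2^q-th root computed as q iterated square roots. *)
Definition schatten_pow2 {R : realType} (n m : nat) (q : nat)
  (A : 'M[R]_(n, m)) : R :=
  iter q Num.sqrt (\tr ((A^T *m A) ^+ (2 ^ q.-1)%N)).

Definition bnorm {R : realType} (n m : nat) (nb : nat -> nat) (q : nat)
  (A : 'M[R]_n) : R :=
  sup [set y : R | exists X : 'M[R]_(n, m),
        inDb nb X /\ opnorm_le1 X /\ y = schatten_pow2 q (A *m X)].

(* Main.v *)
Require Import Defs.
From HB Require Import structures.
From mathcomp Require Import all_boot all_order all_algebra.
From mathcomp Require Import boolp classical_sets reals.
From mathcomp Require Import ring lra.
Set Implicit Arguments. Unset Strict Implicit. Unset Printing Implicit Defensive.
Import Order.TTheory GRing.Theory Num.Theory.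
Local Open Scope ring_scope.




Lemma cs_sum (R : realType) (I : finType) (a b : I -> R) :
  (\sum_i a i * b i) ^+ 2 <= (\sum_i a i ^+ 2) * (\sum_i b i ^+ 2).
Proof.
set A := \sum_i a i ^+ 2; set B := \sum_i a i * b i; set C := \sum_i b i ^+ 2.
have key t : 0 <= t ^+ 2 * A - 2 * t * B + C.
  have -> : t ^+ 2 * A - 2 * t * B + C = \sum_i (t * a i - b i) ^+ 2.
    rewrite /A /B /C mulr_sumr mulr_sumr -sumrN -!big_split /=.
    by apply: eq_bigr => i _; ring.
  by apply: sumr_ge0 => i _; exact: sqr_ge0.
have A0 : 0 <= A by apply: sumr_ge0 => i _; exact: sqr_ge0.
have C0 : 0 <= C by apply: sumr_ge0 => i _; exact: sqr_ge0.
have [Az|Ap] := eqVneq A 0.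
  have a0 k : a k = 0.
    apply/eqP; rewrite -sqrf_eq0; apply/eqP.
    have := psumr_eq0P (P := xpredT) (F := fun i => a i ^+ 2) (fun i _ => sqr_ge0 (a i)).
    by move=> /(_ Az k isT).
  have -> : B = 0 by rewrite /B big1 // => i _; rewrite a0 mul0r.
  by rewrite expr0n /= Az mul0r.
have Apos : 0 < A by rewrite lt_def Ap A0.
have := key (B / A).
have -> : (B / A) ^+ 2 * A - 2 * (B / A) * B + C = C - B ^+ 2 / A.
  by field; rewrite Ap.
rewrite subr_ge0 ler_pdivrMr // => h; by rewrite mulrC.
Qed.


Definition Fn (R : realType) n m (Y : 'M[R]_(n,m)) := \sum_(j < m) \sum_(i < n) Y i j ^+ 2.
Definition gg (R : realType) n m (Y : 'M[R]_(n,m)) (j k : 'I_m) := \sum_(i < n) Y i j * Y i k.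
Definition TT (R : realType) n m (Y : 'M[R]_(n,m)) := \sum_(j < m) \sum_(k < m) (gg Y j k) ^+ 2.

Lemma tr2 (R : realType) n m (Y : 'M[R]_(n,m)) : \tr (Y^T *m Y) = Fn Y.
Proof.
rewrite /mxtrace /Fn; apply: eq_bigr => j _; rewrite mxE; apply: eq_bigr => i _.
by rewrite mxE expr2.
Qed.

Lemma tr4 (R : realType) n m (Y : 'M[R]_(n,m)) : \tr ((Y^T *m Y) ^+ 2) = TT Y.
Proof.
rewrite expr2 -mulmxE /mxtrace /TT; apply: eq_bigr => j _; rewrite mxE.
apply: eq_bigr => k _; rewrite !mxE expr2; congr (_ * _).
  by apply: eq_bigr => i _; rewrite mxE.
by rewrite /gg; apply: eq_bigr => i _; rewrite mxE mulrC.
Qed.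

Lemma mixed (R : realType) n m (Y1 Y2 : 'M[R]_(n,m)) :
  \sum_(j < m) \sum_(k < m) (\sum_(r < n) Y1 r j * Y2 r k) ^+ 2 =
  \sum_(r < n) \sum_(s < n) (\sum_(j < m) Y1 r j * Y1 s j) * (\sum_(k < m) Y2 r k * Y2 s k).
Proof.
transitivity (\sum_(j < m) \sum_(k < m) \sum_(r < n) \sum_(s < n)
    (Y1 r j * Y1 s j) * (Y2 r k * Y2 s k)).
  apply: eq_bigr => j _; apply: eq_bigr => k _.
  rewrite expr2 mulr_suml; apply: eq_bigr => r _; rewrite mulr_sumr.
  by apply: eq_bigr => s _; ring.
transitivity (\sum_(r < n) \sum_(s < n) \sum_(j < m) \sum_(k < m)
    (Y1 r j * Y1 s j) * (Y2 r k * Y2 s k)).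
  under eq_bigr do rewrite exchange_big.
  rewrite exchange_big; apply: eq_bigr => r _.
  under eq_bigr do rewrite exchange_big.
  by rewrite exchange_big.
apply: eq_bigr => r _; apply: eq_bigr => s _.
rewrite mulr_suml; apply: eq_bigr => j _; by rewrite mulr_sumr.
Qed.

Lemma TT_le (R : realType) n m (Y : 'M[R]_(n,m)) : TT Y <= Fn Y ^+ 2.
Proof.
rewrite /TT /Fn expr2 mulr_suml.
apply: ler_sum => j _; rewrite mulr_sumr; apply: ler_sum => k _.
by have := cs_sum (fun i : 'I_n => Y i j) (fun i => Y i k).
Qed.

Lemma Fn_ge0 (R : realType) n m (Y : 'M[R]_(n,m)) : 0 <= Fn Y.
Proof. by apply: sumr_ge0 => j _; apply: sumr_ge0 => i _; exact: sqr_ge0. Qed.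

Lemma TT_ge0 (R : realType) n m (Y : 'M[R]_(n,m)) : 0 <= TT Y.
Proof. by apply: sumr_ge0 => j _; apply: sumr_ge0 => i _; exact: sqr_ge0. Qed.

Lemma main2 (R : realType) n m (Z A : 'M[R]_(n,m)) (f : 'I_n -> nat)
  (hA : forall r j, A r j = if (f r <= j)%N then Z r j else 0) : Fn A <= Fn Z.
Proof.
apply: ler_sum => j _; apply: ler_sum => i _; rewrite hA.
by case: ifP => _; rewrite ?expr0n ?sqr_ge0.
Qed.

Lemma main4 (R : realType) n m (Z A : 'M[R]_(n,m)) (f : 'I_n -> nat)
  (hA : forall r j, A r j = if (f r <= j)%N then Z r j else 0) : TT A <= 4 * TT Z.
Proof.
pose W (j k : 'I_m) := \sum_(r < n) Z r j * A r k.
have hg j k : gg A j k = if (k <= j)%N then W j k else W k j.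
  rewrite /gg /W; case: ifP => hkj; apply: eq_bigr => r _; rewrite !hA.
    case: (leqP (f r) k) => h1; last by rewrite !mulr0.
    by rewrite (leq_trans h1 hkj).
  case: (leqP (f r) j) => h1; last by rewrite mul0r mulr0.
  have hjk : (j <= k)%N by apply: ltnW; rewrite ltnNge hkj.
  by rewrite (leq_trans h1 hjk) mulrC.
set S := \sum_(j < m) \sum_(k < m) W j k ^+ 2.
have S0 : 0 <= S by apply: sumr_ge0 => j _; apply: sumr_ge0 => i _; exact: sqr_ge0.
have h1 : TT A <= 2 * S.
  have -> : 2 * S = \sum_(j < m) \sum_(k < m) (W j k ^+ 2 + W k j ^+ 2).
    have eS : \sum_(j < m) \sum_(k < m) W k j ^+ 2 = S by rewrite /S exchange_big.
    under eq_bigr do rewrite big_split /=.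
    rewrite big_split /= eS; change (2 * S = S + S); ring.
  apply: ler_sum => j _; apply: ler_sum => k _; rewrite hg.
  by case: ifP => _; rewrite ?lerDl ?lerDr sqr_ge0.
have h2 : S ^+ 2 <= TT Z * TT A.
  have eT (Y : 'M[R]_(n,m)) : TT Y = \sum_(r < n) \sum_(s < n) (\sum_(j < m) Y r j * Y s j) ^+ 2.
    rewrite /TT /gg mixed; apply: eq_bigr => r _; apply: eq_bigr => s _; by rewrite expr2.
  rewrite /S /W mixed !eT !pair_big /=.
  exact: (cs_sum (fun p : 'I_n * 'I_n => \sum_(j < m) Z p.1 j * Z p.2 j)
                 (fun p : 'I_n * 'I_n => \sum_(j < m) A p.1 j * A p.2 j)).
have TA0 := TT_ge0 A; have TZ0 := TT_ge0 Z.
nra.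
Qed.

Lemma nb_mono n m nb (hb : block_structure n m nb) a d :
  (a + d <= m)%N -> (nb a <= nb (a + d))%N.
Proof.
case: hb => _ [hs _]; elim: d => [|d IH] h; first by rewrite addn0.
rewrite addnS in h *; apply: leq_trans (IH (ltnW h)) _; exact: ltnW (hs _ h).
Qed.

Lemma nb_le n m nb (hb : block_structure n m nb) a b :
  (a <= b)%N -> (b <= m)%N -> (nb a <= nb b)%N.
Proof.
move=> hab hbm; rewrite -(subnKC hab); apply: (nb_mono hb); by rewrite subnKC.
Qed.

Lemma blk_eq n m nb (hb : block_structure n m nb) (j c : nat) :
  (j < m)%N -> (nb j <= c)%N -> (c < nb j.+1)%N -> blk m nb c = j.
Proof.
move=> hj h1 h2; rewrite /blk.
have e : {in iota 0 m, (fun k => nb k.+1 <= c)%N =1 (fun k => k < j)%N}.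
  move=> k; rewrite mem_iota add0n /= => hk.
  case: (ltnP k j) => hkj.
    by apply: leq_trans _ h1; exact: (nb_le hb hkj (ltnW hj)).
  apply/negbTE; rewrite -ltnNge; apply: leq_trans h2 _.
  by apply: (nb_le hb _ hk); rewrite ltnS.
rewrite (eq_in_count e) -(subnKC (ltnW hj)) iotaD count_cat add0n.
rewrite (@eq_in_count _ _ predT); last by move=> k; rewrite mem_iota.
rewrite count_predT size_iota (@eq_in_count _ _ pred0) ?count_pred0 ?addn0 //.
move=> k; rewrite mem_iota /= => /andP[hk _]; by rewrite ltnNge hk.
Qed.

Lemma Ub_mul (R : realType) n m nb (hb : block_structure n m nb) (M : 'M[R]_n)
  (X : 'M[R]_(n,m)) (hX : inDb nb X) (r : 'I_n) (j : 'I_m) :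
  (Ub m nb M *m X) r j = if (blk m nb r <= j)%N then (M *m X) r j else 0.
Proof.
have key (c : 'I_n) : (if (blk m nb r <= blk m nb c)%N then M r c else 0) * X c j
    = if (blk m nb r <= j)%N then M r c * X c j else 0.
  have [/andP[h1 h2]|hn] := boolP ((nb j <= c) && (c < nb j.+1))%N.
    by rewrite (blk_eq hb (ltn_ord j) h1 h2); case: ifP; rewrite ?mul0r.
  by rewrite hX // !mulr0; case: ifP.
rewrite !mxE; under eq_bigr do rewrite mxE key.
case: ifP => _ //; exact: big1.
Qed.

Lemma col_bound (R : realType) n m (X : 'M[R]_(n,m)) (hX : opnorm_le1 X) (j : 'I_m) :
  \sum_(i < n) X i j ^+ 2 <= 1.
Proof.
have := hX (delta_mx j 0 : 'cV[R]_m).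
have -> : \sum_(i < n) ((X *m (delta_mx j 0 : 'cV[R]_m)) i 0) ^+ 2 = \sum_(i < n) X i j ^+ 2.
  by apply: eq_bigr => i _; rewrite -colE mxE.
move/le_trans; apply; rewrite (bigD1 j) //= big1 ?addr0; first by rewrite !mxE !eqxx expr1n.
by move=> k hk; rewrite !mxE (negbTE hk) /= expr0n.
Qed.

Lemma FMX_bound (R : realType) n m (M : 'M[R]_n) (X : 'M[R]_(n,m)) (hX : opnorm_le1 X) :
  Fn (M *m X) <= m%:R * \sum_(r < n) \sum_(c < n) M r c ^+ 2.
Proof.
have -> : m%:R * \sum_(r < n) \sum_(c < n) M r c ^+ 2 = \sum_(j < m) \sum_(r < n) \sum_(c < n) M r c ^+ 2.
  by rewrite sumr_const card_ord mulr_natl.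
rewrite /Fn; apply: ler_sum => j _.
apply: ler_sum => r _; rewrite mxE.
apply: le_trans (cs_sum (fun c => M r c) (fun c => X c j)) _.
rewrite -[X in _ <= X]mulr1; apply: ler_wpM2l; last exact: col_bound.
by apply: sumr_ge0 => i _; exact: sqr_ge0.
Qed.

Lemma sch_bound (R : realType) n m (q : nat) (hq : (1 <= q <= 2)%N) (Y : 'M[R]_(n,m)) :
  schatten_pow2 q Y <= Num.sqrt (Fn Y).
Proof.
rewrite /schatten_pow2; case: q hq => [|[|[|q]]] //= _.
  by rewrite expn0 expr1 tr2.
rewrite expn1 tr4; apply: ler_wsqrtr.
apply: le_trans (_ : Num.sqrt (Fn Y ^+ 2) <= _).
  exact/ler_wsqrtr/TT_le.
by rewrite sqrtr_sqr ger0_norm // Fn_ge0.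
Qed.

Lemma sqrt_sq (R : realType) (a : R) : 0 <= a -> Num.sqrt (a ^+ 2) = a.
Proof. by move=> h; rewrite sqrtr_sqr ger0_norm. Qed.

Lemma pointwise (R : realType) n m nb (hb : block_structure n m nb) (q : nat)
  (hq : (1 <= q <= 2)%N) (M : 'M[R]_n) (X : 'M[R]_(n,m)) (hX : inDb nb X) :
  schatten_pow2 q (Ub m nb M *m X) <= (2 ^ q.-1)%N%:R * schatten_pow2 q (M *m X).
Proof.
have hA := Ub_mul hb M hX.
rewrite /schatten_pow2; case: q hq => [|[|[|q]]] //= _.
  rewrite expn0 !expr1 !tr2 mul1r; apply: ler_wsqrtr.
  exact: (main2 (f := fun r => blk m nb r)).
rewrite expn1 !tr4.
have h4 := main4 (f := fun r => blk m nb r) hA.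
have T0 := TT_ge0 (M *m X).
have e2 : (2 : R) = Num.sqrt (Num.sqrt 16).
  have e16 : (16 : R) = 4 ^+ 2 by ring.
  have e4 : (4 : R) = 2 ^+ 2 by ring.
  by rewrite e16 sqrt_sq // e4 sqrt_sq.
rewrite e2 -sqrtrM ?sqrtr_ge0 // -sqrtrM //.
apply/ler_wsqrtr/ler_wsqrtr; lra.
Qed.
Local Open Scope classical_set_scope.

Lemma zero_in (R : realType) n m nb : inDb nb (0 : 'M[R]_(n,m)) /\ opnorm_le1 (0 : 'M[R]_(n,m)).
Proof.
split; first by move=> r j _; rewrite mxE.
move=> v; rewrite big1 ?sumr_ge0 // => [i _|i _]; first exact: sqr_ge0.
by rewrite mul0mx mxE expr0n.
Qed.

Theorem mainTheorem10 (R : realType) (n m : nat) (nb : nat -> nat)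
  (hb : block_structure n m nb) (q : nat) (hq : (1 <= q <= 2)%N)
  (M : 'M[R]_n) :
  bnorm m nb q (Ub m nb M) <= (2 ^ q.-1)%N%:R * bnorm m nb q M.
Proof.
rewrite /bnorm.
set SM := [set y : R | exists X : 'M[R]_(n, m),
        inDb nb X /\ opnorm_le1 X /\ y = schatten_pow2 q (M *m X)].
have [z0 z1] := zero_in R n m nb.
have hs : has_sup SM.
  split; first by exists (schatten_pow2 q (M *m (0 : 'M[R]_(n,m)))), 0.
  exists (Num.sqrt (m%:R * \sum_(r < n) \sum_(c < n) M r c ^+ 2)).
  move=> y [X [_ [hX ->]]].
  apply: le_trans (sch_bound hq _) _; apply: ler_wsqrtr; exact: FMX_bound.
apply: ge_sup; first by exists (schatten_pow2 q (Ub m nb M *m (0 : 'M[R]_(n,m)))), 0.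
move=> y [X [hX [hX' ->]]].
apply: le_trans (pointwise hb hq M hX) _.
apply: ler_wpM2l; first exact: ler0n.
by apply: sup_upper_bound hs _ _; exists X.
Qed.
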